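(* Let $n,m\in\mathbb Z$ and $k\le n+m$. Then, in $\mathbb C_w[x,x^{-1},y,y^{-1}]$, \[ \binom{n+m}{k}_w=\sum_{j=k-m}^{n}\binom{n}{j}_w\Big(x^jy^{n-j}\,\binom{m}{k-j}_w\,y^{j-n}x^{-j}\Big)\prod_{i=1}^{k-j}W(i+j,n-j), \] and this is an identity in the commutative ring $\mathbb C[(w(s,t))_{s,t\in\mathbb Z}]$ (after evaluating the conjugations).
   Context: Let $(w(s,t))_{s,t\in\mathbb Z}$ be commuting invertible variables, and $\mathbb C_w[x,x^{-1},y,y^{-1}]$ the associative unital $\mathbb C$-algebra generated by $x^{\pm1},y^{\pm1}$ and the $w(s,t)^{\pm1}$ subject to $x^{-1}x=xx^{-1}=1$, $y^{-1}y=yy^{-1}=1$, $yx=w(1,1)xy$, $x\,w(s,t)=w(s+1,t)x$, $y\,w(s,t)=w(s,t+1)y$. (Consequently $x^jy^{n-j}fy^{j-n}x^{-j}$ is $f$ with each $w(s,t)$ replaced by $w(s+j,t+n-j)$.) Sums $\sum_{j=u}^v$ with $v<u$ are interpreted by the convention $\sum_{j=l}^m A_j=A_l+\dots+A_m$ if $m>l-1$, $0$ if $m=l-1$, $-A_{l-1}-\dots-A_{m+1}$ if $m<l-1$. Product convention: $\prod_{j=l}^m A_j=A_l\cdots A_m$ if $m>l-1$, $=1$ if $m=l-1$, $=A_{l-1}^{-1}\cdots A_{m+1}^{-1}$ if $m<l-1$. $W(s,t)=\prod_{j=1}^tw(s,j)$. $\binom nk_w$ ($n,k\in\mathbb Z$)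 is the unique family with $\binom n0_w=\binom nn_w=1$ for all $n$ and $\binom{n+1}{k}_w=\binom nk_w+\binom n{k-1}_wW(k,n+1-k)$ whenever $(n+1,k)\ne(0,0)$. *)

(* Defs.v *)
From mathcomp Require Import all_boot all_order all_algebra.
Set Implicit Arguments. Unset Strict Implicit. Unset Printing Implicit Defensive.
Import Order.TTheory GRing.Theory Num.Theory.
Local Open Scope ring_scope.

Section WDefs.
Variable R : comUnitRingType.

(* Integer-indexed sum with the paper's convention:
   sum_{j=l}^m A_j = A_l+...+A_m if m > l-1, 0 if m = l-1,
   -A_{l-1}-...-A_{m+1} if m < l-1. *)
Definition zsum (l m : int) (F : int -> R) : R :=
  if l <= m + 1 then \sum_(i < `|(m + 1 - l)%R|%N) F (l + i%:Z)
  else - \sum_(i < `|(l - 1 - m)%R|%N) F (m + 1 + i%:Z).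

(* Integer-indexed product with the paper's convention:
   prod_{j=l}^m A_j = A_l...A_m if m > l-1, 1 if m = l-1,
   A_{l-1}^{-1}...A_{m+1}^{-1} if m < l-1. *)
Definition zprod (l m : int) (F : int -> R) : R :=
  if l <= m + 1 then \prod_(i < `|(m + 1 - l)%R|%N) F (l + i%:Z)
  else \prod_(i < `|(l - 1 - m)%R|%N) (F (m + 1 + i%:Z))^-1.

Definition Wf (w : int -> int -> R) (s t : int) : R := zprod 1 t (w s).

(* The substitution w(s,t) |-> w(s+a, t+b); conjugation by x^j y^(n-j)
   acts on C[w] as this substitution with a = j, b = n - j. *)
Definition wshift (w : int -> int -> R) (a b : int) : int -> int -> R :=
  fun s t => w (s + a) (t + b).

Definition is_wbinom (w : int -> int -> R) (B : int -> int -> R) : Prop :=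
  [/\ forall n, B n 0 = 1,
      forall n, B n n = 1 &
      forall n k, (n + 1, k) != (0, 0) ->
        B (n + 1) k = B n k + B n (k - 1) * Wf w k (n + 1 - k)].

End WDefs.

(* Main.v *)
Require Import Defs.
From mathcomp Require Import all_boot all_order all_algebra.
From mathcomp Require Import zify ring.
From Stdlib Require Import FunctionalExtensionality.
Import Order.TTheory GRing.Theory Num.Theory.
Local Open Scope ring_scope.

Section Aux.
Variable R : comUnitRingType.

Lemma int_ind2 (P : int -> Prop) : P 0 -> (forall b, P b -> P (b + 1)) ->
  (forall b, P (b + 1) -> P b) -> forall b, P b.
Proof.
move=> P0 Pu Pd b.
have Hp : forall p : nat, P p%:Z.
  elim=> [|p IH] //; have -> : p.+1%:Z = p%:Z + 1 by lia. exact: Pu.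
have Hn : forall p : nat, P (- p%:Z).
  elim=> [|p IH] //; apply: Pd; have -> : - p.+1%:Z + 1 = - p%:Z by lia. by [].
case: b => p; first exact: Hp.
have -> : Negz p = - p.+1%:Z by lia. exact: Hn.
Qed.

Lemma unit_cancel (x y u : R) : u \is a GRing.unit -> x * u = y * u -> x = y.
Proof. by move=> hu h; rewrite -(mulrK hu x) h mulrK. Qed.
Arguments unit_cancel {x y u}.

Lemma zprod_unit (l m : int) (F : int -> R) : (forall i, F i \is a GRing.unit) ->
  zprod l m F \is a GRing.unit.
Proof.
move=> hF; rewrite /zprod; case: ifP => _;
  apply: (big_ind (fun x => x \is a GRing.unit)); rewrite ?unitr1 //;
  try (by move=> x y; rewrite unitrM => -> ->); move=> i _ //.
by rewrite unitrV.
Qed.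

Lemma zprod1 (l m : int) (F : int -> R) : (forall i, F i = 1) -> zprod l m F = 1.
Proof. by move=> hF; rewrite /zprod; case: ifP => _; apply: big1 => i _; rewrite hF ?invr1. Qed.

Lemma zprod_step (F : int -> R) (a : int) : (forall i, F i \is a GRing.unit) ->
  zprod 1 (a + 1) F = zprod 1 a F * F (a + 1).
Proof.
move=> hF; rewrite /zprod.
have [ha|[ha|ha]] : 0 <= a \/ a = -1 \/ a <= -2 by lia.
- case: ifP => h1; last by lia. case: ifP => h2; last by lia.
  have -> : absz (a + 1 + 1 - 1)%R = (absz (a + 1 - 1)%R).+1 by lia.
  rewrite big_ord_recr /=; congr (_ * F _); lia.
- case: ifP => h1; last by lia. case: ifP => h2; first by lia.
  have -> : absz (a + 1 + 1 - 1)%R = 0%N by lia.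
  have -> : absz (1 - 1 - a)%R = 1%N by lia.
  rewrite big_ord0 big_ord1.
  have -> : a + 1 + 0%:Z = a + 1 by lia.
  by rewrite mulVr.
- case: ifP => h1; first by lia. case: ifP => h2; first by lia.
  have -> : absz (1 - 1 - a)%R = (absz (1 - 1 - (a + 1))%R).+1 by lia.
  rewrite big_ord_recl -mulrA.
  have -> : a + 1 + 0%:Z = a + 1 by lia.
  rewrite [_ * F (a + 1)]mulrC mulrA mulVr // mul1r.
  apply: eq_bigr => i _; congr (F _)^-1.
  have -> : (lift ord0 i : nat) = i.+1 by []. lia.
Qed.

Lemma zprod0' (F : int -> R) a : a = 0 -> zprod 1 a F = 1.
Proof.
move=> ha; rewrite /zprod; case: ifP => h; last by lia.
have -> : absz (a + 1 - 1)%R = 0%N by lia.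
by rewrite big_ord0.
Qed.

Lemma zprod0 (F : int -> R) : zprod 1 0 F = 1.
Proof. exact: zprod0'. Qed.

Lemma zprod_add (F : int -> R) (a b : int) : (forall i, F i \is a GRing.unit) ->
  zprod 1 a F * zprod 1 b (fun i => F (i + a)) = zprod 1 (a + b) F.
Proof.
move=> hF; have hG : forall i, (fun i => F (i + a)) i \is a GRing.unit.
  by move=> i; apply: hF.
elim/int_ind2: b.
- by rewrite addr0 zprod0 mulr1.
- move=> b IH; rewrite (zprod_step _ b hG).
  rewrite mulrA IH addrA (zprod_step _ _ hF); congr (_ * F _); lia.
- move=> b IH; rewrite (zprod_step _ b hG) in IH.
  rewrite addrA (zprod_step _ _ hF) mulrA in IH.
  apply: (unit_cancel (hF (b + 1 + a))).
  rewrite IH; congr (_ * F _); lia.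
Qed.

Lemma zsum_stepl (l m : int) (F : int -> R) : l <= m + 1 ->
  zsum (l - 1) m F = F (l - 1) + zsum l m F.
Proof.
move=> h; rewrite /zsum ifT; last by lia. rewrite ifT //.
have -> : absz (m + 1 - (l - 1))%R = (absz (m + 1 - l)%R).+1 by lia.
rewrite big_ord_recl addr0; congr (_ + _); apply: eq_bigr => i _.
have -> : (lift ord0 i : nat) = i.+1 by []. congr (F _); lia.
Qed.

Lemma zsum_split (l m : int) (F G : int -> R) :
  zsum l m (fun j => F j + G j) = zsum l m F + zsum l m G.
Proof. by rewrite /zsum; case: ifP => _; rewrite big_split // opprD. Qed.

Lemma zsum_mulr (l m : int) (F : int -> R) c :
  zsum l m (fun j => F j * c) = zsum l m F * c.
Proof. by rewrite /zsum; case: ifP => _; rewrite -mulr_suml // mulNr. Qed.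

Lemma eq_zsum (l m : int) (F G : int -> R) : l <= m + 1 ->
  (forall j, l <= j -> j <= m -> F j = G j) -> zsum l m F = zsum l m G.
Proof.
move=> h hFG; rewrite /zsum h; apply: eq_bigr => i _.
apply: hFG; have := ltn_ord i; lia.
Qed.

Lemma zsum_single (n : int) (F : int -> R) : zsum n n F = F n.
Proof.
rewrite /zsum ifT; last by lia.
have -> : absz (n + 1 - n)%R = 1%N by lia.
by rewrite big_ord1 addr0.
Qed.

Lemma zsum_empty (n : int) (F : int -> R) : zsum (n + 1) n F = 0.
Proof.
rewrite /zsum ifT; last by lia.
have -> : absz (n + 1 - (n + 1))%R = 0%N by lia.
by rewrite big_ord0.
Qed.

Lemma binom_neg (w : int -> int -> R) (B : int -> int -> R) :
  (forall s t, w s t \is a GRing.unit) -> is_wbinom w B ->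
  forall t, t < 0 -> B 0 t = 0.
Proof.
move=> hw [B0 Bd Br].
have hW : forall s t, Wf w s t \is a GRing.unit by move=> s t; apply: zprod_unit.
have H : forall d n : nat, B n%:Z (- d.+1%:Z) = 0.
  elim=> [|d IH] n.
    have := Br n 0; rewrite !B0 => /(_ _)/esym.
    case/(_ _)/Wrap; first by apply/negP => /eqP [] /eqP; lia.
    rewrite sub0r => /eqP; rewrite -subr_eq0 addrC addKr => /eqP h.
    by apply: (unit_cancel (hW 0 (n%:Z + 1 - 0))); rewrite h mul0r.
  have := Br n (- d.+1%:Z); case/(_ _)/Wrap; first by apply/negP => /eqP [] /eqP; lia.
  have -> : n%:Z + 1 = n.+1%:Z by lia.
  rewrite !IH add0r => /esym h.
  have -> : - d.+2%:Z = - d.+1%:Z - 1 by lia.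
  apply: (unit_cancel (hW (- d.+1%:Z) (n.+1%:Z - - d.+1%:Z))).
  by rewrite h mul0r.
move=> t ht; have -> : t = - (absz t).-1.+1%:Z by lia.
exact: (H _ 0%N).
Qed.

Lemma zsum0 (l m : int) (F : int -> R) : l <= m + 1 ->
  (forall j, l <= j -> j <= m -> F j = 0) -> zsum l m F = 0.
Proof.
move=> h hF; rewrite /zsum h; apply: big1 => i _.
apply: hF; have := ltn_ord i; lia.
Qed.

Lemma Wf_unit (w : int -> int -> R) s t : (forall s t, w s t \is a GRing.unit) ->
  Wf w s t \is a GRing.unit.
Proof. by move=> hw; apply: zprod_unit. Qed.

End Aux.

Section Main.
Variable R : comUnitRingType.
Variable w : int -> int -> R.
Hypothesis hw : forall s t, w s t \is a GRing.unit.
Variable binom : (int -> int -> R) -> int -> int -> R.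
Hypothesis hbinom : forall a b, is_wbinom (wshift w a b) (binom (wshift w a b)).
Variable n : int.

Lemma wshift0 : wshift w 0 0 = w.
Proof.
apply: functional_extensionality => s; apply: functional_extensionality => t.
by rewrite /wshift !addr0.
Qed.

Lemma hB : is_wbinom w (binom w).
Proof. by have := hbinom 0 0; rewrite wshift0. Qed.

Lemma hws a b : forall s t, wshift w a b s t \is a GRing.unit.
Proof. by move=> s t; apply: hw. Qed.

Definition T (m k j : int) : R :=
  binom w n j * binom (wshift w j (n - j)) m (k - j)
      * zprod 1 (k - j) (fun i => Wf w (i + j) (n - j)).

Definition S (m k : int) : R := zsum (k - m) n (T m k).

Lemma T_int m k j : k - m <= j ->
  T (m + 1) k j = T m k j + T m (k - 1) j * Wf w k (n + m + 1 - k).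
Proof.
move=> hj; rewrite /T.
have [_ _ Br] := hbinom j (n - j).
rewrite (Br m (k - j)); last by rewrite xpair_eqE; lia.
rewrite (_ : k - 1 - j = k - j - 1); last by lia.
set G := (fun i => Wf w (i + j) (n - j)).
have hP : zprod 1 (k - j) G = zprod 1 (k - j - 1) G * Wf w k (n - j).
  rewrite {1}(_ : k - j = k - j - 1 + 1); last by lia.
  rewrite zprod_step; last by move=> i; apply: Wf_unit.
  rewrite /G; congr (_ * Wf w _ _); lia.
have hW : Wf w k (n - j) * Wf (wshift w j (n - j)) (k - j) (m + 1 - (k - j))
    = Wf w k (n + m + 1 - k).
  rewrite /Wf.
  have -> : wshift w j (n - j) (k - j) = fun i => w k (i + (n - j)).
    apply: functional_extensionality => i; by rewrite /wshift subrK.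
  rewrite zprod_add //; congr zprod; lia.
rewrite hP -hW; ring.
Qed.

Lemma T_bd m k :
  T (m + 1) k (k - m - 1) = T m (k - 1) (k - m - 1) * Wf w k (n + m + 1 - k).
Proof.
rewrite /T.
have [_ Bd _] := hbinom (k - m - 1) (n - (k - m - 1)).
rewrite (_ : k - (k - m - 1) = m + 1); last by lia.
rewrite (_ : k - 1 - (k - m - 1) = m); last by lia.
rewrite !Bd zprod_step; last by move=> i; apply: Wf_unit.
rewrite !mulr1 -mulrA; congr (_ * (_ * Wf w _ _)); lia.
Qed.

Lemma Srec m k : k <= n + m ->
  S (m + 1) k = S m k + S m (k - 1) * Wf w k (n + m + 1 - k).
Proof.
move=> hk; rewrite /S.
rewrite (_ : k - (m + 1) = k - m - 1); last by lia.
rewrite (_ : k - 1 - m = k - m - 1); last by lia.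
rewrite !zsum_stepl; try lia.
rewrite (@eq_zsum _ (k - m) n (T (m + 1) k)
   (fun j => T m k j + T m (k - 1) j * Wf w k (n + m + 1 - k))); last first.
- by move=> j hj _; apply: T_int.
- lia.
rewrite zsum_split zsum_mulr T_bd; ring.
Qed.

Lemma Lrec m k : k <= n + m ->
  binom w (n + (m + 1)) k = binom w (n + m) k + binom w (n + m) (k - 1) * Wf w k (n + m + 1 - k).
Proof.
move=> hk; have [_ _ Br] := hB.
rewrite addrA Br //; rewrite xpair_eqE; lia.
Qed.

Lemma Ldiag m : binom w (n + m) (n + m) = 1.
Proof. by have [_ Bd _] := hB; rewrite Bd. Qed.

Lemma Sdiag m : S m (n + m) = 1.
Proof.
rewrite /S (_ : n + m - m = n); last by lia.
rewrite zsum_single /T (_ : n + m - n = m); last by lia.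
have [_ Bd _] := hB; have [_ Bd' _] := hbinom n (n - n).
rewrite Bd Bd' mul1r mul1r; apply: zprod1 => i.
by rewrite subrr /Wf zprod0.
Qed.

Lemma Sbase k : k <= n -> binom w (n + 0) k = S 0 k.
Proof.
move=> hk; rewrite addr0 /S subr0.
have := @zsum_stepl _ (k + 1) n (T 0 k); rewrite (_ : k + 1 - 1 = k); last by lia.
move=> ->; last by lia.
rewrite zsum0; first last.
- move=> j hj _; rewrite /T.
  have := @binom_neg _ _ _ (@hws j (n - j)) (hbinom j (n - j)).
  move=> -> ; last by lia.
  by rewrite mulr0 mul0r.
- lia.
rewrite addr0 /T subrr zprod0 mulr1.
have [B0 _ _] := hbinom k (n - k).
by rewrite B0 mulr1.
Qed.

Lemma main_all m k : k <= n + m -> binom w (n + m) k = S m k.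
Proof.
have hWu : forall s t, Wf w s t \is a GRing.unit by move=> s t; apply: Wf_unit.
elim/int_ind2: m k.
- move=> k hk; apply: Sbase; lia.
- move=> m IH k hk.
  have [e|ne] := eqVneq k (n + (m + 1)).
    by rewrite e Ldiag Sdiag.
  have hk' : k <= n + m by lia.
  rewrite Lrec // Srec // !IH //; lia.
- move=> m IH.
  have H : forall d : nat, binom w (n + m) (n + m - d%:Z) = S m (n + m - d%:Z).
    elim=> [|d IHd]; first by rewrite subr0 Ldiag Sdiag.
    set k' := n + m - d%:Z.
    have hk' : k' <= n + m by rewrite /k'; lia.
    have e1 := Lrec m k' hk'; have e2 := Srec m k' hk'.
    rewrite IH in e1; last by rewrite /k'; lia.
    rewrite e2 IHd in e1.
    have := addrI _ e1 => /esym e3.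
    rewrite (_ : n + m - d.+1%:Z = k' - 1); last by rewrite /k'; lia.
    exact: (@unit_cancel _ _ _ _ (hWu k' (n + m + 1 - k')) e3).
  move=> k hk; have := H (absz (n + m - k)%R).
  by rewrite (_ : n + m - (absz (n + m - k)%R)%:Z = k); last by lia.
Qed.

End Main.

Theorem corollary2 (R : comUnitRingType) (w : int -> int -> R)
    (hw : forall s t, w s t \is a GRing.unit)
    (binom : (int -> int -> R) -> int -> int -> R)
    (hbinom : forall a b, is_wbinom (wshift w a b) (binom (wshift w a b)))
    (n m k : int) (hk : k <= n + m) :
  binom w (n + m) k =
  zsum (k - m) n (fun j =>
    binom w n j * binom (wshift w j (n - j)) m (k - j)
      * zprod 1 (k - j) (fun i => Wf w (i + j) (n - j))).
Proof. exact: (@main_all R w hw binom hbinom n m k hk). Qed.
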